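(* Let $\mathcal{L}^{\mu}\in\mathbb{C}^{p\times t}$ be nonzero with $\|\mathcal{L}^{\mu}\|_{\max}<1$, let $N\in\mathbb{N}$ and $\alpha>0$, and set $\beta_k=\beta_k(N)=\min\{(1.5)^k,(1.5)^N\}\cdot\frac{1.25}{\|\mathcal{L}^{\mu}\|_2}$. Consider the iteration $\mathcal{N}^0=0$, $Z^0=\mathcal{L}^{\mu}/\|\mathcal{L}^{\mu}\|_2$ and, for $k\ge0$, $$\mathcal{A}^{k+1}=M^k-\hat P_{\alpha/\beta_k}(M^k),\quad M^k=\tfrac1{\beta_k}Z^k-\mathcal{N}^k+\mathcal{L}^{\mu},$$ $$\mathcal{N}^{k+1}=U\,\mathrm{diag}\big(\max\{\sigma_i-\tfrac1{\beta_k},0\}\big)V^*\ \text{ where } \mathcal{L}^{\mu}-\mathcal{A}^{k+1}+\tfrac1{\beta_k}Z^k=U\,\mathrm{diag}(\sigma_i)V^*\ \text{(SVD)},$$ $$Z^{k+1}=Z^k-\beta_k(\mathcal{N}^{k+1}+\mathcal{A}^{k+1}-\mathcal{L}^{\mu}).$$ Suppose there are constants $p>0$ and $q\in(0,1)$ such that $\|\mathcal{L}^{\mu}-\mathcal{N}^r-\mathcal{A}^r\|_{\max}\le pq^r$ for all $r\ge1$. If $$\alpha>c(\mathcal{L}^{\mu}):=\frac{\|\mathcal{L}^{\mu}\|_{\max}}{\|\mathcal{L}^{\mu}\|_2}+\frac{1.25p}{\|\mathcal{L}^{\mu}\|_2}\cdot\frac{1-(1.5)^Nq^N}{1-1.5q}+\frac{\beta_N(N)\,p\,q^N}{1-q},$$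 then $\|\mathcal{A}^k\|_{\max}<1$ for all $k\in\mathbb{N}$ (so the deformations reconstructed from the columns of $\mathcal{A}^k$ are bijective).
   Context: $\|A\|_{\max}=\max_{i,j}|a_{ij}|$; $\|A\|_2$ is the spectral norm (largest singular value); $V^*$ is the conjugate transpose; $\hat P_{r}$ acts entrywise as the Euclidean projection of $\mathbb{C}$ onto the closed disk $\{z:|z|\le r\}$. This iteration is the ADMM scheme for $\min\|\mathcal{N}\|_*+\alpha\|\mathcal{A}\|_1$ subject to $\mathcal{N}+\mathcal{A}=\mathcal{L}^{\mu}$, where $\|\mathcal{A}\|_1=\sum_{i,j}|a_{ij}|$. *)

(* Defs.v *)
From mathcomp Require Import all_boot all_order all_algebra reals complex.
Set Implicit Arguments. Unset Strict Implicit. Unset Printing Implicit Defensive.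
Import Order.TTheory GRing.Theory Num.Theory.
Local Open Scope ring_scope.

Section Defs.
Variable R : realType.
Local Notation C := R[i].

Definition cmod (z : C) : R := Normc.normc z.

Definition toC (x : R) : C := (x%:C)%C.

Definition maxnorm m n (A : 'M[C]_(m, n)) : R :=
  \big[Num.max/0]_(i < m) \big[Num.max/0]_(j < n) cmod (A i j).

Definition conjT m n (A : 'M[C]_(m, n)) : 'M[C]_(n, m) :=
  (map_mx (fun z => (z^*)%C) A)^T.

Definition unitary n (U : 'M[C]_n) : Prop := U *m conjT U = 1%:M.

Definition rdiag_nonneg m n (S : 'M[R]_(m, n)) : Prop :=
  (forall (i : 'I_m) (j : 'I_n), nat_of_ord i != nat_of_ord j -> S i j = 0) /\
  (forall i j, 0 <= S i j).

Definition is_svd m n (A : 'M[C]_(m, n)) (U : 'M[C]_m) (S : 'M[R]_(m, n))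
    (V : 'M[C]_n) : Prop :=
  [/\ unitary U, unitary V, rdiag_nonneg S & A = U *m map_mx toC S *m conjT V].

Definition spectral_norm m n (A : 'M[C]_(m, n)) (s : R) : Prop :=
  exists U S V, is_svd A U S V /\
    s = \big[Num.max/0]_(i < m) \big[Num.max/0]_(j < n) S i j.

Definition svt m n (tau : R) (A B : 'M[C]_(m, n)) : Prop :=
  exists U S V, is_svd A U S V /\
    B = U *m map_mx (fun x => toC (Num.max (x - tau) 0)) S *m conjT V.

Definition proj_disk (r : R) (z : C) : C :=
  if cmod z <= r then z else toC (r / cmod z) * z.

Definition beta (nL : R) (N k : nat) : R :=
  Num.min ((3 / 2) ^+ k) ((3 / 2) ^+ N) * ((5 / 4) / nL).

End Defs.

(* Main.v *)
Require Import Defs.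
From mathcomp Require Import all_boot all_order all_algebra reals complex.
From mathcomp Require Import ring lra.
Import Order.TTheory GRing.Theory Num.Theory.
Local Open Scope ring_scope.

Section Aux.
Variable R : realType.
Local Notation C := R[i].

Lemma cmod_ge0 (z : C) : 0 <= cmod z.
Proof. by case: z => a b; rewrite /cmod /Normc.normc sqrtr_ge0. Qed.

Lemma cmodD (x y : C) : cmod (x + y) <= cmod x + cmod y.
Proof. exact: le_normcD. Qed.

Lemma cmodN (x : C) : cmod (- x) = cmod x.
Proof. exact: normcN. Qed.

Lemma cmodM (x y : C) : cmod (x * y) = cmod x * cmod y.
Proof. exact: Normc.normcM. Qed.

Lemma cmodR (x : R) : cmod (toC x) = `|x|.
Proof. by rewrite /cmod /toC /= expr0n /= addr0 sqrtr_sqr. Qed.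

Lemma cmodB (x y : C) : cmod (x - y) <= cmod x + cmod y.
Proof. by rewrite -(cmodN y) cmodD. Qed.

Lemma cmod0 : cmod (0 : C) = 0.
Proof. exact: Normc.normc0. Qed.

Lemma entry_le m n (A : 'M[C]_(m, n)) i j : cmod (A i j) <= maxnorm A.
Proof.
rewrite /maxnorm; apply: le_trans (le_bigmax _ _ i).
exact: (le_bigmax _ (fun j => cmod (A i j)) j).
Qed.

Lemma maxnorm_lt1 m n (A : 'M[C]_(m, n)) :
  (forall i j, cmod (A i j) < 1) -> maxnorm A < 1.
Proof.
move=> H; rewrite /maxnorm; apply: bigmax_lt => // i _.
by apply: bigmax_lt => // j _.
Qed.

Lemma proj_lt1 (r : R) (z : C) : 0 <= r -> cmod z < r + 1 ->
  cmod (z - proj_disk r z) < 1.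
Proof.
move=> r0 hz; rewrite /proj_disk; case: ifP => hc.
  by rewrite subrr cmod0.
have hlt : r < cmod z by rewrite ltNge hc.
have c0 : 0 < cmod z by apply: le_lt_trans hlt.
have -> : z - toC (r / cmod z) * z = toC (1 - r / cmod z) * z.
  by rewrite /toC rmorphB rmorph1 mulrBl mul1r.
rewrite cmodM cmodR ger0_norm; last first.
  by rewrite subr_ge0 ler_pdivrMr // mul1r ltW.
rewrite mulrBl mul1r divfK; last by rewrite gt_eqF.
by rewrite ltrBlDr addrC.
Qed.
End Aux.
Section Scal.
Variable R : realType.
Variables (nL : R) (N : nat) (p q : R).
Hypothesis nL0 : 0 < nL.
Hypotheses (p0 : 0 < p) (q0 : 0 < q) (q1 : q < 1).
Local Notation b := (beta nL N).

Lemma b_le k : (k <= N)%N -> b k = (3/2)^+k * (5/4/nL).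
Proof.
move=> h; rewrite /beta; congr (_ * _); apply/min_idPl.
by apply: ler_weXn2l => //; lra.
Qed.

Lemma b_ge k : (N <= k)%N -> b k = (3/2)^+N * (5/4/nL).
Proof.
move=> h; rewrite /beta; congr (_ * _); apply/min_idPr.
by apply: ler_weXn2l => //; lra.
Qed.

Lemma b_pos k : 0 < b k.
Proof.
rewrite /beta; apply: mulr_gt0; last by apply: divr_gt0 => //; lra.
by rewrite lt_min !exprn_gt0 //; lra.
Qed.

Lemma b_mono k : b k <= b k.+1.
Proof.
case: (leqP N k) => h.
  by rewrite b_ge // b_ge // (leq_trans h).
rewrite b_le ?(ltnW h) // b_le //.
apply: ler_wpM2r; first by apply: ltW; apply: divr_gt0 => //; lra.
by apply: ler_weXn2l => //; lra.
Qed.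

Lemma hq1 : 1 - q != 0.
Proof. by rewrite subr_eq0 eq_sym lt_eqF. Qed.

Definition g k := \sum_(j < k) b j * p * q ^+ j + b k * p * q ^+ k / (1 - q).

Lemma g_step k : g k.+1 = g k + p * q ^+ k * q / (1 - q) * (b k.+1 - b k).
Proof.
rewrite /g big_ord_recr /= exprS.
by field; exact: hq1.
Qed.

Lemma g_inc k : g k <= g k.+1.
Proof.
rewrite g_step lerDl; apply: mulr_ge0; last by rewrite subr_ge0 b_mono.
apply: divr_ge0; last by rewrite subr_ge0 ltW.
by rewrite !mulr_ge0 ?exprn_ge0 ?ltW.
Qed.

Lemma g_const k : (N <= k)%N -> g k.+1 = g k.
Proof.
move=> h; by rewrite g_step (b_ge _ h) (b_ge _ (leqW h)) subrr mulr0 addr0.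
Qed.

Lemma g_le k : g k <= g N.
Proof.
case: (leqP k N) => h.
  rewrite -(subnK h); elim: (N - k)%N => [|d IH] //.
  by apply: le_trans IH _; rewrite addSn g_inc.
rewrite -(subnK (ltnW h)); elim: (k - N)%N => [|d IH] //.
by rewrite addSn g_const ?leq_addl.
Qed.

Lemma geom (x : R) n : (\sum_(j < n) x ^+ j) * (1 - x) = 1 - x ^+ n.
Proof.
elim: n => [|n IH]; first by rewrite big_ord0 expr0 mul0r subrr.
by rewrite big_ord_recr /= mulrDl IH exprS; ring.
Qed.

Lemma hnL : nL != 0.
Proof. by rewrite gt_eqF. Qed.

Lemma gN_eq : 3 / 2 * q != 1 ->
  g N = (5 / 4) * p / nL * ((1 - (3 / 2) ^+ N * q ^+ N) / (1 - 3 / 2 * q))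
        + b N * p * q ^+ N / (1 - q).
Proof.
move=> hq; rewrite /g; congr (_ + _).
have -> : \sum_(j < N) b j * p * q ^+ j = (5/4) * p / nL * \sum_(j < N) (3/2 * q) ^+ j.
  rewrite mulr_sumr; apply: eq_bigr => j _.
  rewrite b_le ?(ltnW (ltn_ord j)) // [in RHS]exprMn.
  by field; exact: hnL.
have hx : 1 - 3/2 * q != 0 by rewrite subr_eq0 eq_sym.
rewrite -exprMn -(geom (3/2 * q) N).
field; apply/andP; split; last exact: hnL.
apply/negP => /eqP h; move: hq => /eqP; apply; lra.
Qed.


Lemma T_le_g k : \sum_(j < k) beta nL N j * p * q ^+ j + beta nL N k * p * q ^+ k <= g k.
Proof.
rewrite /g lerD2l ler_pdivlMr ?subr_gt0 //.
apply: ler_piMr; first by apply: mulr_ge0; [apply: mulr_ge0; apply: ltW => //; exact: b_pos | apply: exprn_ge0; exact: ltW].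
by rewrite lerBlDr lerDl ltW.
Qed.

End Scal.

Theorem theorem7 (R : realType) (m n : nat) (L : 'M[R[i]]_(m, n)) (nL : R)
    (N : nat) (alpha p q : R) (Nm Am Zm : nat -> 'M[R[i]]_(m, n)) :
  L != 0 ->
  maxnorm L < 1 ->
  spectral_norm L nL ->
  0 < alpha ->
  Nm 0%N = 0 ->
  Zm 0%N = toC (nL^-1) *: L ->
  (forall k : nat,
     Am k.+1 = (toC ((beta nL N k)^-1) *: Zm k - Nm k + L)
               - map_mx (proj_disk (alpha / beta nL N k))
                        (toC ((beta nL N k)^-1) *: Zm k - Nm k + L)) ->
  (forall k : nat,
     svt (beta nL N k)^-1 (L - Am k.+1 + toC ((beta nL N k)^-1) *: Zm k) (Nm k.+1)) ->
  (forall k : nat,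
     Zm k.+1 = Zm k - toC (beta nL N k) *: (Nm k.+1 + Am k.+1 - L)) ->
  0 < p -> 0 < q -> q < 1 ->
  (forall r : nat, (0 < r)%N -> maxnorm (L - Nm r - Am r) <= p * q ^+ r) ->
  3 / 2 * q != 1 ->
  maxnorm L / nL
    + (5 / 4) * p / nL * ((1 - (3 / 2) ^+ N * q ^+ N) / (1 - 3 / 2 * q))
    + beta nL N N * p * q ^+ N / (1 - q) < alpha ->
  forall k : nat, maxnorm (Am k.+1) < 1.
Proof.
move=> L0 Lmax [U [S [V [[_ _ [_ Sge0] LE] nLE]]]] alpha0 N0 Z0 AE _ ZE p0 q0 q1 Ebd hq hc.
have nLge0 : 0 <= nL by rewrite nLE bigmax_ge_id.
have nLgt0 : 0 < nL.
  rewrite lt_def nLge0 andbT; apply: contra L0 => /eqP n0.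
  have S0 : S = 0.
    apply/matrixP => i j; rewrite mxE; apply/eqP; rewrite eq_le Sge0 andbT -n0 nLE.
    apply: le_trans (le_bigmax _ _ i).
    exact: (le_bigmax _ (fun j => S i j) j).
  apply/eqP; rewrite LE S0.
  have -> : map_mx (@toC R) (0 : 'M[R]_(m, n)) = 0.
    by apply/matrixP => i j; rewrite !mxE /toC rmorph0.
  by rewrite mulmx0 mul0mx.
set b := beta nL N.
set mL := maxnorm L.
have key : forall k, mL / nL + \sum_(j < k) b j * p * q ^+ j + b k * p * q ^+ k < alpha.
  move=> k; apply: le_lt_trans hc.
  rewrite /b -[in X in _ <= X]addrA -(@gN_eq _ nL N p q nLgt0 hq) -addrA lerD2l.
  exact: (le_trans (@T_le_g _ nL N p q nLgt0 p0 q0 q1 k) (@g_le _ nL N p q nLgt0 p0 q0 q1 k)).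
have bpos : forall k, 0 < b k by move=> k; exact: b_pos.
have Zb : forall k i j, cmod (Zm k i j) <= mL / nL + \sum_(j < k) b j * p * q ^+ j.
  elim=> [|k IH] i j.
    rewrite Z0 big_ord0 addr0 mxE cmodM cmodR ger0_norm ?invr_ge0 //.
    by rewrite mulrC ler_pM2r ?invr_gt0 // entry_le.
  rewrite ZE big_ord_recr /= addrA.
  have -> : (Zm k - toC (b k) *: (Nm k.+1 + Am k.+1 - L)) i j
            = Zm k i j + toC (b k) * (L - Nm k.+1 - Am k.+1) i j.
    by rewrite !mxE; ring.
  apply: le_trans (@cmodD _ _ _) _; apply: lerD; first exact: IH.
  rewrite cmodM cmodR ger0_norm; last exact: ltW (bpos k).
  rewrite -mulrA ler_pM2l //.
  apply: le_trans (@entry_le _ _ _ _ _ _) _; apply: le_trans (Ebd _ _) _ => //.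
  rewrite ler_pM2l // exprS ler_piMl //; [exact: exprn_ge0 (ltW q0) | exact: ltW].
have step : forall k, (forall i j, cmod ((L - Nm k) i j) < 1 + p * q ^+ k) ->
    forall i j, cmod (Am k.+1 i j) < 1.
  move=> k HX i j.
  rewrite AE.
  set M := (toC (b k)^-1 *: Zm k - Nm k + L).
  have -> : (M - map_mx (proj_disk (alpha / b k)) M) i j
            = M i j - proj_disk (alpha / b k) (M i j) by rewrite !mxE.
  apply: proj_lt1; first by rewrite divr_ge0 ?ltW.
  have -> : M i j = toC (b k)^-1 * Zm k i j + (L - Nm k) i j.
    by rewrite !mxE; ring.
  apply: le_lt_trans (@cmodD _ _ _) _.
  rewrite cmodM cmodR ger0_norm ?invr_ge0 ?ltW //.
  have h1 : (b k)^-1 * cmod (Zm k i j) + p * q ^+ k < alpha / b k.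
    have -> : (b k)^-1 * cmod (Zm k i j) + p * q ^+ k
              = (cmod (Zm k i j) + b k * p * q ^+ k) / b k.
      by field; rewrite gt_eqF.
    rewrite ltr_pM2r ?invr_gt0 //.
    apply: le_lt_trans (key k); rewrite lerD2r.
    exact: Zb.
  have h2 := HX i j.
  set z := (b k)^-1 * cmod (Zm k i j) in h1 *.
  set w := cmod _ in h2 *.
  lra.
have main : forall k i j, cmod (Am k.+1 i j) < 1.
  elim=> [|k IH].
    apply: step => i j; rewrite N0 subr0 expr0 mulr1.
    apply: le_lt_trans (@entry_le _ _ _ _ _ _) _; apply: lt_le_trans Lmax _.
    by rewrite lerDl ltW.
  apply: step => i j.
  have -> : (L - Nm k.+1) i j = Am k.+1 i j + (L - Nm k.+1 - Am k.+1) i j.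
    by rewrite !mxE; ring.
  apply: le_lt_trans (@cmodD _ _ _) _; apply: ltr_leD; first exact: IH.
  by apply: le_trans (@entry_le _ _ _ _ _ _) _; apply: Ebd.
by move=> k; apply: maxnorm_lt1; apply: main.
Qed.
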